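(* Consider a black-white array (BWA) storing at most $n=2^m-1$ values, and average the cost of searching for a value not present in it over the $n$ possible configurations $\mathtt{total}\in\{1,\dots,n\}$. This average time is $O(\log^2 n)$.
   Context: A black-white array (BWA) of size $N=2^K$ stores values from a totally ordered set. Its white array is $W[1..N-1]$. For $i\ge0$, the segment of rank $i$ is the index block $[2^i,2^{i+1}-1]$, of length $2^i$. A state variable $\mathtt{total}$ counts stored values. The rank-$i$ segment is active iff bit $i$ of $\mathtt{total}$ is $1$; thus the configuration of the BWA is determined by $\mathtt{total}$. Between operations, all stored values lie in the active white segments, each sorted ascending. Search$(v)$: for $i=K-1$ down to $0$, if the rank-$i$ segment is active, binary-search the white rank-$i$ segment for $v$. A binary search of a segment of length $L$ costs $O(\log L+1)$. Return the index at the first success, or Nil if none. An unsuccessful search therefore binary-searches every active segment. *)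

(* Defs.v *)
From mathcomp Require Import all_boot.

(* Black-white array of size N = 2^K; white array W[1..N-1].
   The rank-i segment [2^i, 2^(i+1)-1] (length 2^i) is active iff
   bit i of [total] is 1. *)
Definition seg_active (total i : nat) : bool := odd (total %/ 2 ^ i).

(* Cost of an unsuccessful Search in a BWA of size 2^K with state [total],
   where [bs L] is the cost of binary-searching a segment of length L.
   The loop runs i = K-1 down to 0; each iteration pays one unit for the
   activity test, plus [bs (2^i)] if the rank-i segment is active
   (an unsuccessful search binary-searches every active segment). *)
Definition unsucc_search_cost (bs : nat -> nat) (K total : nat) : nat :=
  \sum_(i < K) (1 + (if seg_active total i then bs (2 ^ i) else 0)).

Definition total_unsucc_cost (bs : nat -> nat) (m : nat) : nat :=
  \sum_(1 <= t < (2 ^ m - 1).+1) unsucc_search_cost bs m t.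

(* Main.v *)
Require Import Defs.
From mathcomp Require Import all_boot.
From mathcomp Require Import zify ring.

Lemma cost_le (C : nat) (bs : nat -> nat) (m t : nat) :
  (forall L, bs L <= C * (trunc_log 2 L + 1)) ->
  unsucc_search_cost bs m t <= m * (1 + C * m).
Proof.
move=> H; rewrite /unsucc_search_cost.
apply: leq_trans (_ : \sum_(i < m) (1 + C * m) <= _); last first.
  by rewrite sum_nat_const card_ord.
apply: leq_sum => i _; rewrite leq_add2l.
case: ifP => _ //.
apply: leq_trans (H _) _; rewrite trunc_expnK //.
apply: leq_mul => //; rewrite addn1; exact: ltn_ord.
Qed.

Theorem mainTheorem10 :
  forall C : nat, exists D : nat,
  forall bs : nat -> nat,
    (forall L, bs L <= C * (trunc_log 2 L + 1)) ->
  forall m : nat, 2 <= m ->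
    let n := 2 ^ m - 1 in
    total_unsucc_cost bs m <= D * n * (trunc_log 2 n) ^ 2.
Proof.
move=> C; exists (4 * (1 + C)); intros bs H m Hm; set n := 2 ^ m - 1.
have Hn : trunc_log 2 n = m.-1.
  rewrite /n; case: (m) Hm => // k Hk; apply: trunc_log_eq => //=.
  have : 1 <= 2 ^ k by rewrite expn_gt0.
  rewrite !expnS; lia.
cbv zeta.
rewrite Hn /total_unsucc_cost.
apply: leq_trans (_ : \sum_(1 <= t < n.+1) (m * (1 + C * m)) <= _).
  by apply: leq_sum => t _; apply: cost_le.
rewrite sum_nat_const_nat subn1 /=.
have E : m * (1 + C * m) <= (1 + C) * (m * m) by nia.
have F : m * m <= 4 * (m.-1 ^ 2) by rewrite expnS expn1; nia.
apply: leq_trans (_ : n * ((1 + C) * (4 * m.-1 ^ 2)) <= _); last first.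
  apply: eq_leq; move: (1 + C) (m.-1 ^ 2) => a b; clearbody n; ring.
apply: leq_mul => //; apply: leq_trans E _; exact: leq_mul.
Qed.
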